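(* Let $F$ be a field of characteristic $0$, $L=F(I)$ with $I^2=-1$, and $D=(V,E)$ a simply laced diagram on vertices $v_1,\dots,v_n$. For $1\le r\le n$ let $\mathfrak k_{\le r}$ be the Lie algebra with generators $X_1,\dots,X_r$ and relations $[X_i,[X_i,X_j]]=-X_j$ if $\{v_i,v_j\}\in E$, $[X_i,X_j]=0$ if $i\ne j$ and $\{v_i,v_j\}\notin E$ ($i,j\le r$). Let $1\le r<n$ and let $\rho:\mathfrak k_{\le r}\to\operatorname{End}(L^s)$ be a generalized spin representation. (a) If $v_{r+1}$ is adjacent to none of $v_1,\dots,v_r$, then $\rho$ extends to a generalized spin representation $\rho':\mathfrak k_{\le r+1}\to\operatorname{End}(L^s)$ with $\rho'(X_{r+1})=\tfrac12I\,\mathrm{id}_s$. (b) Otherwise, let $s_0$ be the sign automorphism of $\mathfrak k_{\le r}$ with $s_0(X_i)=-X_i$ if $\{v_i,v_{r+1}\}\in E$ and $s_0(X_i)=X_i$ otherwise. Then there is a generalized spin representation $\rho':\mathfrak k_{\le r+1}\to\operatorname{End}(L^s\oplus L^s)$ with $\rho'|_{\mathfrak k_{\le r}}=\rho\oplus(\rho\circ s_0)$ and $\rho'(X_{r+1})=\tfrac12 I\,\mathrm{id}_s\otimes\begin{pmatrix}0&1\\1&0\end{pmatrix}$, i.e. in block form $\rho'(X_{r+1})=\begin{pmatrix}0&\tfrac12 I\,\mathrm{id}_s\\ \tfrac12 I\,\mathrm{id}_s&0\end{pmatrix}$.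
   Context: $\mathfrak k_{\le r}$ is (by Berman's theorem) the maximal compact subalgebra of the Kac--Moody algebra over $F$ whose diagram is the subgraph of $D$ induced on $v_1,\dots,v_r$, with Berman generators $X_1,\dots,X_r$. A generalized spin representation of a Lie algebra given by such a presentation is a Lie algebra homomorphism $\rho$ into $\operatorname{End}(L^s)$ (over $F$) with $\rho(X_i)^2=-\tfrac14\mathrm{id}_s$ for all generators $X_i$. A sign automorphism is $X_i\mapsto\epsilon_iX_i$ with $\epsilon_i\in\{\pm1\}$. *)

(* Defs.v *)
From HB Require Import structures.
From mathcomp Require Import all_boot all_order all_algebra.
Set Implicit Arguments. Unset Strict Implicit. Unset Printing Implicit Defensive.
Import GRing.Theory.
Local Open Scope ring_scope.

Definition lie (L : fieldType) (s : nat) (A B : 'M[L]_s) : 'M[L]_s :=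
  A *m B - B *m A.

(* A Lie algebra homomorphism k_{<=r} -> End(L^s) from the Lie algebra
   presented by generators X_0..X_{r-1} (0-based) and the Berman relations
   attached to the diagram with edge relation E is (by the universal property
   of a presentation) the same thing as a family A of images of the generators
   (A i = rho(X_i)) satisfying the defining relations. *)
Definition berman_rep (L : fieldType) (s : nat) (E : nat -> nat -> bool)
    (r : nat) (A : nat -> 'M[L]_s) : Prop :=
  forall i j, (i < r)%N -> (j < r)%N ->
    (E i j -> lie (A i) (lie (A i) (A j)) = - A j) /\
    (i != j -> ~~ E i j -> lie (A i) (A j) = 0).

Definition gen_spin_rep (L : fieldType) (s : nat) (E : nat -> nat -> bool)
    (r : nat) (A : nat -> 'M[L]_s) : Prop :=
  berman_rep E r A /\
  (forall i, (i < r)%N -> A i *m A i = (- (4%:R)^-1) %:M).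

(* The sign s0(X_i) = eps_i X_i, with eps_i = -1 iff v_i is adjacent to v_k. *)
Definition sign0 (L : fieldType) (E : nat -> nat -> bool) (k i : nat) : L :=
  if E i k then -1 else 1.

(* Main.v *)
Require Import Defs.
From HB Require Import structures.
From mathcomp Require Import all_boot all_order all_algebra.
From mathcomp Require Import ring.
Import GRing.Theory.
Local Open Scope ring_scope.

Section Help.
Variables (L : fieldType) (s : nat).
Implicit Types (a b X Y : 'M[L]_s).

Lemma lieZl (e : L) a b : lie (e *: a) b = e *: lie a b.
Proof. by rewrite /lie scalerBr -scalemxAl -scalemxAr. Qed.
Lemma lieZr (e : L) a b : lie a (e *: b) = e *: lie a b.
Proof. by rewrite /lie scalerBr -scalemxAl -scalemxAr. Qed.

Lemma lie_dd a b (a' b' : 'M[L]_s) :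
  lie (block_mx a 0 0 b) (block_mx a' 0 0 b') = block_mx (lie a a') 0 0 (lie b b').
Proof.
rewrite /lie !mulmx_block !mulmx0 !mul0mx !addr0 !add0r.
by rewrite opp_block_mx add_block_mx !subr0.
Qed.

Lemma lie_do a b X Y :
  lie (block_mx a 0 0 b) (block_mx 0 X Y 0) = block_mx 0 (a *m X - X *m b) (b *m Y - Y *m a) 0.
Proof.
rewrite /lie !mulmx_block !mulmx0 !mul0mx !addr0 !add0r.
by rewrite opp_block_mx add_block_mx !subr0.
Qed.

Lemma lie_od a b X Y :
  lie (block_mx 0 X Y 0) (block_mx a 0 0 b) = block_mx 0 (X *m b - a *m X) (Y *m a - b *m Y) 0.
Proof.
rewrite /lie !mulmx_block !mulmx0 !mul0mx !addr0 !add0r.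
by rewrite opp_block_mx add_block_mx !subr0.
Qed.

Lemma lie_oo X Y (X' Y' : 'M[L]_s) :
  lie (block_mx 0 X Y 0) (block_mx 0 X' Y' 0) = block_mx (X *m Y' - X' *m Y) 0 0 (Y *m X' - Y' *m X).
Proof.
rewrite /lie !mulmx_block !mulmx0 !mul0mx !addr0 !add0r.
by rewrite opp_block_mx add_block_mx !subr0.
Qed.

Ltac mxexp H := rewrite ?(mulmxBl, mulmxBr, mulmxDl, mulmxDr, mulmxN, mulNmx) ?(mul_scalar_mx, mul_mx_scalar);
  rewrite -?(scalemxAl, scalemxAr) ?(mulmxN, mulNmx) -?(scalemxAl, scalemxAr) ?H;
  rewrite ?(scalerBr, scalerDr, scalerN, scalerA, opprK, scale_scalar_mx).

Lemma k1 (c : L) a (hc : c * c = - (4%:R)^-1) (h4 : (4%:R : L) != 0) :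
  lie (block_mx 0 c%:M c%:M 0) (lie (block_mx 0 c%:M c%:M 0) (block_mx a 0 0 ((-1) *: a)))
  = - block_mx a 0 0 ((-1) *: a).
Proof.
rewrite !lie_od lie_oo opp_block_mx !oppr0; congr block_mx.
  mxexp hc.
  do 3 rewrite -?scalerBl -?scalerDl. rewrite -scaleN1r -?scalerBl -?scalerDl.
  rewrite [X in X *: _ = _](_ : _ = -1) //.
  rewrite !mulrN1 hc; field => //.
mxexp hc.
do 3 rewrite -?scalerBl -?scalerDl. rewrite -scaleN1r ?scalerA -?scalerBl -?scalerDl.
rewrite [X in X *: _ = _](_ : _ = -1 * -1) //.
rewrite !mulrN1 hc; field => //.
Qed.

Lemma k2 (c : L) a (hc : c * c = - (4%:R)^-1) (h4 : (4%:R : L) != 0)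
  (ha : a *m a = (- (4%:R)^-1)%:M) :
  lie (block_mx a 0 0 ((-1) *: a)) (lie (block_mx a 0 0 ((-1) *: a)) (block_mx 0 c%:M c%:M 0))
  = - block_mx 0 c%:M c%:M 0.
Proof.
rewrite !lie_do opp_block_mx !oppr0; congr block_mx.
  mxexp ha. rewrite -?raddfD -?raddfB -?raddfN.
  congr (_%:M). rewrite !mulrN1. field => //.
mxexp ha. rewrite -?raddfD -?raddfB -?raddfN.
congr (_%:M). rewrite !mulrN1. field => //.
Qed.

Lemma k3 (c : L) a : lie (block_mx 0 c%:M c%:M 0) (block_mx a 0 0 (1 *: a)) = 0.
Proof. by rewrite lie_od scale1r mul_scalar_mx mul_mx_scalar !subrr block_mx0. Qed.
Lemma k4 (c : L) a : lie (block_mx a 0 0 (1 *: a)) (block_mx 0 c%:M c%:M 0) = 0.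
Proof. by rewrite lie_do scale1r mul_scalar_mx mul_mx_scalar !subrr block_mx0. Qed.

End Help.

Theorem mainTheorem8 (L : fieldType) (I : L)
  (charL : [pchar L] =i pred0) (HI : I ^+ 2 = -1)
  (n : nat) (E : nat -> nat -> bool)
  (Esym : forall i j, (i < n)%N -> (j < n)%N -> E i j = E j i)
  (Eirr : forall i, (i < n)%N -> ~~ E i i)
  (r s : nat) (hr1 : (1 <= r)%N) (hrn : (r < n)%N)
  (A : nat -> 'M[L]_s) (hA : gen_spin_rep E r A) :
  ((forall i, (i < r)%N -> ~~ E i r) ->
     exists A' : nat -> 'M[L]_s,
       gen_spin_rep E r.+1 A' /\
       (forall i, (i < r)%N -> A' i = A i) /\
       A' r = (I / 2%:R)%:M) /\
  ((exists2 i, (i < r)%N & E i r) ->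
     exists A' : nat -> 'M[L]_(s + s),
       gen_spin_rep E r.+1 A' /\
       (forall i, (i < r)%N ->
          A' i = block_mx (A i) 0 0 (@sign0 L E r i *: A i)) /\
       A' r = block_mx 0 (I / 2%:R)%:M (I / 2%:R)%:M 0).
Proof.
have h2 : (2%:R : L) != 0.
  apply/negP => /eqP h; have := charL 2; rewrite !inE /= h eqxx /=; done.
set c := I / 2%:R.
have hc : c * c = - (4%:R)^-1.
  rewrite /c mulrACA -expr2 HI -invfM -natrM mulN1r //.
have Err : ~~ E r r by apply: Eirr.
case: hA => [hB hS].
split.
  move=> hnE.
  exists (fun k => if (k < r)%N then A k else c%:M).
  split; last by split => [i ->|]; rewrite ?ltnn.
  split.
    move=> i j; rewrite !ltnS => hi0 hj0; move: hi0 hj0.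
    rewrite [(i <= r)%N]leq_eqVlt [(j <= r)%N]leq_eqVlt => /orP[/eqP->|hi] /orP[/eqP->|hj].
    - by rewrite ltnn (negbTE Err) eqxx.
    - rewrite ltnn hj Esym // ?(ltn_trans hj) // (negbTE (hnE _ hj)); split => // _ _.
      by rewrite /lie scalar_mxC subrr.
    - rewrite ltnn hi (negbTE (hnE _ hi)); split => // _ _.
      by rewrite /lie scalar_mxC subrr.
    - rewrite hi hj; exact: hB.
  move=> i; rewrite ltnS [(i <= r)%N]leq_eqVlt => /orP[/eqP->|hi].
    by rewrite ltnn -scalar_mxM hc.
  by rewrite hi; apply: hS.
move=> _.
have se k : @sign0 L E r k * @sign0 L E r k = 1.
  by rewrite /sign0; case: (E k r); rewrite ?mulN1r ?opprK ?mulr1.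
exists (fun k => if (k < r)%N then block_mx (A k) 0 0 (@sign0 L E r k *: A k)
                 else block_mx 0 c%:M c%:M 0).
split; last by split => [i ->|]; rewrite ?ltnn.
split.
  have h4 : (4%:R : L) != 0.
    by rewrite (_ : 4 = 2 * 2)%N // natrM mulf_neq0.
  move=> i j; rewrite !ltnS => hi0 hj0; move: hi0 hj0.
  rewrite [(i <= r)%N]leq_eqVlt [(j <= r)%N]leq_eqVlt => /orP[/eqP->|hi] /orP[/eqP->|hj].
  - by rewrite ltnn (negbTE Err) eqxx.
  - rewrite ltnn hj Esym // ?(ltn_trans hj) //; rewrite /sign0.
    case: (E j r); split => //.
    + by move=> _; rewrite k1.
    + by move=> _ _; rewrite k3.
  - rewrite ltnn hi; rewrite /sign0.
    case: (E i r); split => //.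
    + by move=> _; rewrite k2 // hS.
    + by move=> _ _; rewrite k4.
  - rewrite hi hj; have [hb1 hb2] := hB i j hi hj; split.
      move=> hE; rewrite !lie_dd !(lieZl, lieZr) hb1 // !scalerA se mul1r.
      by rewrite opp_block_mx oppr0 scalerN.
    by move=> hne hE; rewrite lie_dd !(lieZl, lieZr) hb2 // !scaler0 block_mx0.
move=> i; rewrite ltnS [(i <= r)%N]leq_eqVlt => /orP[/eqP->|hi].
  rewrite ltnn mulmx_block !mulmx0 !mul0mx !addr0 !add0r -scalar_mxM hc.
  by rewrite -scalar_mx_block.
rewrite hi mulmx_block !mulmx0 !mul0mx !addr0 !add0r -scalemxAl -scalemxAr scalerA se scale1r hS //.
by rewrite -scalar_mx_block.
Qed.
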